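(* Let $G$ be a maximal outerplanar graph with at least three vertices. Then $\mathrm{fall}(G)=\{3\}$.
   Context: For a graph $G=(V,E)$ and a partition $\Pi=\{V_1,\dots,V_k\}$ of $V$, a vertex $v\in V_i$ is colorful if $v$ is adjacent to at least one vertex of each class $V_j$ with $j\neq i$. $\Pi$ is a fall $k$-coloring if every $V_i$ is an independent set and every vertex is colorful; equivalently, $V$ is partitioned into $k$ independent dominating sets. The fall set $\mathrm{fall}(G)$ is the set of all integers $k$ such that $G$ admits a fall $k$-coloring. *)

(* Defs.v *)
From mathcomp Require Import all_boot.
Set Implicit Arguments. Unset Strict Implicit. Unset Printing Implicit Defensive.

(* A finite simple graph: vertex type T : finType, adjacency e : rel T,
   assumed symmetric and irreflexive (hypotheses of the theorem). *)

(* Outerplanar (combinatorial convex-drawing form): the vertices can be placed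
   in a cyclic order on a circle (positions p, injective) so that no two edges,
   drawn as straight chords, cross, i.e. no edges ab, cd with
   p a < p c < p b < p d. *)
Definition outerplanar (T : finType) (e : rel T) : Prop :=
  exists p : T -> nat, injective p /\
    forall a b c d, e a b -> e c d -> ~~ ((p a < p c) && (p c < p b) && (p b < p d)).

Definition add_edge (T : finType) (e : rel T) (x y : T) : rel T :=
  fun u v => [|| e u v, (u == x) && (v == y) | (u == y) && (v == x)].

Definition maximal_outerplanar (T : finType) (e : rel T) : Prop :=
  outerplanar e /\
  forall x y : T, x != y -> ~~ e x y -> ~ outerplanar (add_edge e x y).

Definition fall_coloring (T : finType) (e : rel T) (k : nat) : Prop :=
  exists c : T -> 'I_k,
    (forall i : 'I_k, exists v, c v = i) /\
    (forall u v, e u v -> c u != c v) /\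
    (forall (v : T) (i : 'I_k), i != c v -> exists u, e v u && (c u == i)).

Definition fall_set (T : finType) (e : rel T) : nat -> Prop :=
  fun k => fall_coloring e k.

(* Main.v *)
Require Import Defs.
From mathcomp Require Import all_boot.
From mathcomp Require Import zify.

Section Main.
Variables (T : finType) (e : rel T) (p : T -> nat).
Hypotheses (esym : symmetric e) (eirr : irreflexive e) (pinj : injective p).
Hypothesis nc : forall {a b c d}, e a b -> e c d -> ~~ ((p a < p c) && (p c < p b) && (p b < p d)).
Hypothesis emax : forall x y : T, x != y -> ~~ e x y -> ~ outerplanar (add_edge e x y).

Lemma cross {a b c d} : e a b -> e c d -> p a < p c -> p c < p b -> p b < p d -> False.
Proof. by move=> ab cd h1 h2 h3; move: (nc ab cd); rewrite h1 h2 h3. Qed.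

Lemma max_edge x y : p x < p y ->
  (forall a b, e a b -> p x < p a < p y -> p x <= p b <= p y) -> e x y.
Proof.
move=> xy H; apply/negPn/negP => nxy.
have xny : x != y by apply/eqP => exy; move: xy; rewrite exy ltnn.
suff : outerplanar (add_edge e x y) by exact: emax xny nxy.
exists p; split => // a b c d.
rewrite /add_edge => /or3P [ab|/andP[/eqP-> /eqP->]|/andP[/eqP-> /eqP->]]
  /or3P [cd|/andP[/eqP-> /eqP->]|/andP[/eqP-> /eqP->]];
  apply/negP => /andP[/andP[h1 h2] h3]; try lia.
- exact: cross ab cd h1 h2 h3.
- have := H b a; rewrite esym => /(_ ab); rewrite h2 h3 /= => /(_ isT); lia.
- have := H c d cd; rewrite h1 h2 /= => /(_ isT); lia.
Qed.

Definition btw i j := [set x | p i < p x < p j].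

Lemma tri {i j} : e i j -> p i < p j -> (exists z, p i < p z < p j) ->
  exists k, [/\ p i < p k < p j, e i k & e k j].
Proof.
move=> eij ij [z hz].
case: (@arg_minnP _ z (fun x => p i < p x < p j) p hz) => m hm mmin.
have eim : e i m.
  apply: max_edge; first by case/andP: hm.
  move=> a b _ /andP[h1 h2]; exfalso.
  have : p i < p a < p j by case/andP: hm => _ h; rewrite h1 /=; lia.
  move/mmin; lia.
have Pm : (p i < p m < p j) && e i m by rewrite hm eim.
case: (@arg_maxnP _ m (fun x => (p i < p x < p j) && e i x) p Pm) => k /andP[hk eik] kmax.
exists k; split=> //; apply: max_edge; first by case/andP: hk.
move=> a b eab /andP[h1 h2].
case: (ltnP (p j) (p b)) => hbj.
  exfalso; apply: (cross eij eab) => //; lia.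
case: (ltnP (p b) (p k)) => hbk; last by lia.
exfalso.
case: (ltngtP (p b) (p i)) => hbi.
- apply: (cross (a:=b) (b:=a) (c:=i) (d:=j)) => //; first by rewrite esym.
  + by case/andP: hk => ? ?; lia.
- apply: (cross (a:=i) (b:=k) (c:=b) (d:=a)) => //; first by rewrite esym.
- have bi : b = i by apply: pinj.
  subst b.
  have : (p i < p a < p j) && e i a by rewrite esym eab andbT; apply/andP; split; lia.
  move/kmax; lia.
Qed.

Lemma card_btw_lt i j k l : p i <= p k -> p l <= p j ->
  (exists z, p i < p z < p j /\ ~~ (p k < p z < p l)) -> #|btw k l| < #|btw i j|.
Proof.
move=> ik lj [z [hz nz]]; apply: proper_card; apply/properP; split.
  apply/subsetP => x; rewrite !inE => /andP[h1 h2]; apply/andP; split; lia.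
by exists z; rewrite !inE.
Qed.

Lemma three {a b c x : 'I_3} : a != b -> b != c -> a != c -> x != a ->
  (x == b) || (x == c).
Proof.
rewrite -!val_eqE /=; have := ltn_ord a; have := ltn_ord b; have := ltn_ord c;
have := ltn_ord x; move=> *; lia.
Qed.

Definition third (ci cj : 'I_3) : 'I_3 := inord (3 - ci - cj).

Lemma thirdP {ci cj : 'I_3} : ci != cj -> third ci cj != ci /\ third ci cj != cj.
Proof.
rewrite -val_eqE /= => h.
rewrite /third -!val_eqE /= inordK; have := ltn_ord ci; have := ltn_ord cj;
move=> *; [split; lia | lia].
Qed.

Lemma color_base i j : e i j -> p i < p j ->
  (forall z, (p i < p z < p j) = false) ->
  forall ci cj : 'I_3, ci != cj ->
  exists c : T -> 'I_3, [/\ c i = ci, c j = cj,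
   (forall a b, p i <= p a <= p j -> p i <= p b <= p j -> e a b -> c a != c b) &
   (forall v col, p i < p v < p j -> col != c v ->
       exists u, [&& p i <= p u <= p j, e v u & c u == col])].
Proof.
move=> eij ij nz ci cj cij.
have ji : j != i by apply/eqP => ji; move: ij; rewrite ji ltnn.
exists (fun x => if x == i then ci else cj); split.
- by rewrite eqxx.
- by rewrite (negbTE ji).
- move=> a b ha hb eab.
  have ai : forall a, p i <= p a <= p j -> a = i \/ a = j.
    move=> x hx; case: (ltngtP (p x) (p i)) => h; [lia| |by left; apply: pinj].
    case: (ltngtP (p x) (p j)) => h'; [|lia|by right; apply: pinj].
    by move: (nz x); rewrite h h'.
  case: (ai a ha) => ?; case: (ai b hb) => ?; subst;
    rewrite ?eqxx ?(negbTE ji) ?eirr // in eab *; rewrite eq_sym //.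
- by move=> v col hv; move: (nz v); rewrite hv.
Qed.

Lemma color_int n i j : #|btw i j| <= n -> e i j -> p i < p j ->
  forall ci cj : 'I_3, ci != cj ->
  exists c : T -> 'I_3, [/\ c i = ci, c j = cj,
   (forall a b, p i <= p a <= p j -> p i <= p b <= p j -> e a b -> c a != c b) &
   (forall v col, p i < p v < p j -> col != c v ->
       exists u, [&& p i <= p u <= p j, e v u & c u == col])].
Proof.
elim: n i j => [|n IH] i j hc eij ij ci cj cij;
  case: (pickP [pred z | p i < p z < p j]) => [z hz|nz];
  try (apply: color_base => // z; exact: nz z).
  exfalso; have : z \in btw i j by rewrite inE.
  by move: hc; rewrite leqn0 => /eqP/card0_eq ->.
have [k [hk eik ekj]] := tri eij ij (ex_intro _ z hz).
set ck := third ci cj.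
have [cki ckj] := thirdP cij.
have h1 : #|btw i k| <= n.
  have : #|btw i k| < #|btw i j|.
    apply: card_btw_lt; [lia|lia|exists k; split => //; rewrite ltnn andbF //].
  lia.
have h2 : #|btw k j| <= n.
  have : #|btw k j| < #|btw i j|.
    apply: card_btw_lt; [lia|lia|exists k; split => //; rewrite ltnn //].
  lia.
have [ik kj] : p i < p k /\ p k < p j by case/andP: hk.
have cik : ci != ck by rewrite eq_sym.
have [c1 [c1i c1k c1p c1c]] := IH i k h1 eik ik ci ck cik.
have [c2 [c2k c2j c2p c2c]] := IH k j h2 ekj kj ck cj ckj.
have [c [E1 E2]] : exists c : T -> 'I_3, (forall x, p x <= p k -> c x = c1 x) /\
    (forall x, p k <= p x -> c x = c2 x).
  exists (fun x => if p x <= p k then c1 x else c2 x); split=> x h; first by rewrite h.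
  case: (leqP (p x) (p k)) => // h'.
  have xk : x = k by apply: pinj; lia.
  by subst x; rewrite c1k c2k.
clear IH hc h1 h2 hz hk.
have claim a b : p i <= p a <= p k -> p k <= p b <= p j -> e a b -> c a != c b.
  move=> /andP[ha1 ha2] /andP[hb1 hb2] eab.
  case: (eqVneq (p a) (p k)) => hak.
    rewrite (E2 a) ?(E2 b) ?hak //. apply: c2p => //; apply/andP; split => //; lia.
  case: (eqVneq (p b) (p k)) => hbk.
    rewrite (E1 a) ?(E1 b) ?hbk //. apply: c1p => //; apply/andP; split => //; lia.
  have hak' : p a < p k by rewrite ltn_neqAle hak.
  have hbk' : p k < p b by rewrite ltn_neqAle eq_sym hbk.
  case: (eqVneq (p a) (p i)) => hai; case: (eqVneq (p b) (p j)) => hbj.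
  - have -> : a = i by apply: pinj.
    have -> : b = j by apply: pinj.
    by rewrite (E1 i) ?(E2 j) ?c1i ?c2j // ltnW.
  - have ai : a = i by apply: pinj.
    subst a; exfalso; apply: (cross eab ekj) => //.
    by rewrite ltn_neqAle hbj.
  - have bj : b = j by apply: pinj.
    subst b; exfalso; apply: (cross eik eab) => //.
    by rewrite ltn_neqAle eq_sym hai.
  - exfalso; apply: (cross eik eab) => //.
    by rewrite ltn_neqAle eq_sym hai.
exists c; split.
- by rewrite E1 ?c1i // ltnW.
- by rewrite E2 ?c2j // ltnW.
- move=> a b ha hb eab.
  case/andP: ha => ha1 ha2; case/andP: hb => hb1 hb2.
  case: (leqP (p a) (p k)) => hak; case: (leqP (p b) (p k)) => hbk.
  + by rewrite (E1 a) ?(E1 b) //; apply: c1p => //; apply/andP.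
  + by apply: claim => //; apply/andP; split => //; apply: ltnW.
  + by rewrite eq_sym; apply: claim; rewrite 1?esym //; apply/andP; split => //; apply: ltnW.
  + rewrite (E2 a) ?(E2 b) ?(ltnW hak) ?(ltnW hbk) //.
    by apply: c2p => //; apply/andP; split => //; apply: ltnW.
- move=> v col /andP[hv1 hv2] hcol.
  case: (ltngtP (p v) (p k)) => hvk.
  + rewrite (E1 v (ltnW hvk)) in hcol.
    have [|u /and3P[/andP[hu1 hu2] evu cu]] := c1c v col _ hcol; first by rewrite hv1 hvk.
    exists u; rewrite evu (E1 u hu2) cu hu1 /= andbT.
    exact: leq_trans hu2 (ltnW kj).
  + rewrite (E2 v (ltnW hvk)) in hcol.
    have [|u /and3P[/andP[hu1 hu2] evu cu]] := c2c v col _ hcol; first by rewrite hv2 hvk.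
    exists u; rewrite evu (E2 u hu1) cu hu2 /= andbT.
    by rewrite andbT (leq_trans (ltnW ik) hu1).
  + have vk : v = k by apply: pinj.
    subst v; rewrite (E1 k (leqnn _)) c1k in hcol.
    case/orP: (three cki cij ckj hcol) => /eqP ->.
    * by exists i; rewrite esym eik (E1 i (ltnW ik)) c1i eqxx leqnn (ltnW ij).
    * by exists j; rewrite ekj (E2 j (ltnW kj)) c2j eqxx leqnn (ltnW ij).
Qed.
Lemma deg2 n i j : #|btw i j| <= n -> e i j -> p i < p j -> (exists z, p i < p z < p j) ->
  exists m u w, forall x, e m x -> x = u \/ x = w.
Proof.
elim: n i j => [|n IH] i j hc eij ij [z hz].
  exfalso; have : z \in btw i j by rewrite inE.
  by move: hc; rewrite leqn0 => /eqP/card0_eq ->.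
have [k [hk eik ekj]] := tri eij ij (ex_intro _ z hz).
have [ik kj] : p i < p k /\ p k < p j by case/andP: hk.
case: (pickP [pred y | p i < p y < p k]) => [y hy|n1].
  apply: (IH i k) => //; last by exists y.
  have : #|btw i k| < #|btw i j|.
    apply: card_btw_lt; [lia|lia|exists k; split => //; rewrite ltnn andbF //].
  lia.
case: (pickP [pred y | p k < p y < p j]) => [y hy|n2].
  apply: (IH k j) => //; last by exists y.
  have : #|btw k j| < #|btw i j|.
    apply: card_btw_lt; [lia|lia|exists k; split => //; rewrite ltnn //].
  lia.
exists k, i, j => x ekx.
case: (ltngtP (p x) (p i)) => hxi.
- exfalso; apply: (cross (a:=x) (b:=k) (c:=i) (d:=j)) => //; by rewrite esym.
- case: (ltngtP (p x) (p j)) => hxj.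
  + case: (ltngtP (p x) (p k)) => hxk.
    * by move: (n1 x); rewrite /= hxi hxk.
    * by move: (n2 x); rewrite /= hxj hxk.
    * have xk : x = k by apply: pinj.
      by subst x; rewrite eirr in ekx.
  + exfalso; apply: (cross eij ekx) => //.
  + by right; apply: pinj.
- by left; apply: pinj.
Qed.

Lemma main_sec : 3 <= #|T| -> forall k, fall_coloring e k <-> k = 3.
Proof.
move=> h3 k.
have /card_gt0P [z0 _] : 0 < #|T| by lia.
case: (@arg_minnP T z0 xpredT p isT) => x0 _ x0min.
case: (@arg_maxnP T z0 xpredT p isT) => x1 _ x1max.
have rng x : p x0 <= p x <= p x1.
  by apply/andP; split; [apply: x0min | apply: x1max].
have [z /andP[zx0 zx1]] : exists z, (z != x0) && (z != x1).
  apply/existsP; case: (boolP [exists y, (y != x0) && (y != x1)]) => // /existsPn H.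
  exfalso.
  have : #|T| <= 2.
    rewrite -cardsT; apply: leq_trans (_ : #|[set x0; x1]| <= 2).
      apply: subset_leq_card; apply/subsetP => y _; rewrite !inE.
      by move: (H y); rewrite negb_and !negbK.
    by rewrite cards2; case: (_ != _).
  lia.
have nz0 : p z != p x0 by apply: contra zx0 => /eqP/pinj ->.
have nz1 : p z != p x1 by apply: contra zx1 => /eqP/pinj ->.
have hz : p x0 < p z < p x1 by move: (rng z); lia.
have h01 : p x0 < p x1 by lia.
have e01 : e x0 x1 by apply: max_edge => // a b _ _; apply: rng.
have [t [ht e0t et1]] := tri e01 h01 (ex_intro _ z hz).
split.
- case=> c [csurj [cprop ccol]].
  have h3k : 3 <= k.
    move: (cprop _ _ e01) (cprop _ _ e0t) (cprop _ _ et1); rewrite -!val_eqE /=.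
    have := ltn_ord (c x0); have := ltn_ord (c x1); have := ltn_ord (c t).
    lia.
  have [m [u [w hm]]] := deg2 _ _ _ (leqnn #|btw x0 x1|) e01 h01 (ex_intro _ z hz).
  have : k.-1 <= 2.
    have := cardsC1 (c m); rewrite card_ord => <-.
    apply: leq_trans (_ : #|[set c u; c w]| <= 2); last first.
      by rewrite cards2; case: (_ != _).
    apply: subset_leq_card; apply/subsetP => i; rewrite !inE => hi.
    have [v /andP[emv /eqP <-]] := ccol m i hi.
    by case: (hm v emv) => ->; rewrite eqxx ?orbT.
  lia.
- move=> ->.
  have [c [c0 c1 cp cc]] :=
    color_int _ _ _ (leqnn #|btw x0 x1|) e01 h01 (ord0 : 'I_3) ord_max isT.
  have cp' a b : e a b -> c a != c b by apply: cp; apply: rng.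
  have d01 := cp' _ _ e01; have d0t := cp' _ _ e0t; have dt1 := cp' _ _ et1.
  exists c; split; [|split].
  + move=> i; case: (eqVneq i (c x0)) => [->|hi]; first by exists x0.
    have d1t : c x1 != c t by rewrite eq_sym.
    by case/orP: (three d01 d1t d0t hi) => /eqP ->; [exists x1|exists t].
  + exact: cp'.
  + move=> v i hi.
    case: (eqVneq v x0) => [vx0|nv0].
      subst v; have d1t : c x1 != c t by rewrite eq_sym.
      by case/orP: (three d01 d1t d0t hi) => /eqP ->;
        [exists x1; rewrite e01 eqxx|exists t; rewrite e0t eqxx].
    case: (eqVneq v x1) => [vx1|nv1].
      subst v; have d10 : c x1 != c x0 by rewrite eq_sym.
      have d1t : c x1 != c t by rewrite eq_sym.
      by case/orP: (three d10 d0t d1t hi) => /eqP ->;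
        [exists x0; rewrite esym e01 eqxx|exists t; rewrite esym et1 eqxx].
    have n0 : p v != p x0 by apply: contra nv0 => /eqP/pinj ->.
    have n1 : p v != p x1 by apply: contra nv1 => /eqP/pinj ->.
    have hv : p x0 < p v < p x1 by move: (rng v); lia.
    have [u /and3P[_ evu cu]] := cc v i hv hi.
    by exists u; rewrite evu cu.
Qed.

End Main.

Theorem theorem3 (T : finType) (e : rel T) :
  symmetric e -> irreflexive e -> 3 <= #|T| -> maximal_outerplanar e ->
  forall k : nat, fall_set e k <-> k = 3.
Proof.
move=> es ei h3 [[p [pi nc]] em] k.
exact (@main_sec T e p es ei pi nc em h3 k).
Qed.
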